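(* Let $X$ be a real Hilbert space, let $\alpha\in\mathbb{R}\setminus\{0\}$ and $\beta>0$, equip $X\times X\times\mathbb{R}$ with the norm $\|(u,v,\gamma)\|=\sqrt{\|u\|^2+\|v\|^2+\beta^2|\gamma|^2}$, and let $\widetilde{C}_\alpha=\{(u,v,\gamma)\in X\times X\times\mathbb{R}: \|u\|^2-\|v\|^2=2\alpha\gamma\}$. Let $(u_0,v_0,\gamma_0)\in X\times X\times\mathbb{R}$. Then the problem of minimizing $f(u,v,\gamma)=\|u-u_0\|^2+\|v-v_0\|^2+\beta^2|\gamma-\gamma_0|^2$ subject to $\|u\|^2-\|v\|^2-2\alpha\gamma=0$ always has a solution, i.e., $P_{\widetilde{C}_\alpha}(u_0,v_0,\gamma_0)\neq\varnothing$. Moreover, if $(u,v,\gamma)\in P_{\widetilde{C}_\alpha}(u_0,v_0,\gamma_0)$, then $u,u_0$ are conically dependent and $v,v_0$ are conically dependent.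
   Context: $P_S(z)=\operatorname{argmin}_{w\in S}\|w-z\|$ with respect to the weighted norm above. Two vectors $x,x_0\in X$ are conically dependent if there exists $s\geq0$ such that $x=sx_0$ or $x_0=sx$. *)

(* Defs.v *)
From HB Require Import structures.
From mathcomp Require Import all_boot all_order all_algebra.
From mathcomp Require Import all_classical all_reals all_analysis.
Set Implicit Arguments. Unset Strict Implicit. Unset Printing Implicit Defensive.
Import Order.TTheory GRing.Theory Num.Theory.
Import numFieldNormedType.Exports.
Local Open Scope classical_set_scope.
Local Open Scope ring_scope.

(* A real Hilbert space is a complete normed space X (over the reals R) whose
   norm is induced by an inner product ip: ip is symmetric, linear in its
   first argument, and ip x x = `|x|^2. *)
Definition is_inner_product (R : realType) (X : normedModType R)
  (ip : X -> X -> R) : Prop :=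
  (forall x y, ip x y = ip y x) /\
  (forall (a : R) (x y z : X), ip (a *: x + y) z = a * ip x z + ip y z) /\
  (forall x, ip x x = `|x| ^+ 2).

Definition wnorm (R : realType) (X : normedModType R) (beta : R)
  (w : X * X * R) : R :=
  Num.sqrt (`|w.1.1| ^+ 2 + `|w.1.2| ^+ 2 + beta ^+ 2 * `|w.2| ^+ 2).

Definition wdist (R : realType) (X : normedModType R) (beta : R)
  (w z : X * X * R) : R :=
  wnorm beta (w.1.1 - z.1.1, w.1.2 - z.1.2, w.2 - z.2).

Definition Ctilde (R : realType) (X : normedModType R) (alpha : R) :
  set (X * X * R) :=
  [set w | `|w.1.1| ^+ 2 - `|w.1.2| ^+ 2 = 2 * alpha * w.2].

Definition metric_proj (R : realType) (X : normedModType R) (beta : R)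
  (S : set (X * X * R)) (z : X * X * R) : set (X * X * R) :=
  [set w | S w /\ forall w', S w' -> wdist beta w z <= wdist beta w' z].

Definition conically_dependent (R : realType) (X : normedModType R)
  (x x0 : X) : Prop :=
  exists s : R, 0 <= s /\ (x = s *: x0 \/ x0 = s *: x).
Arguments Ctilde {R} X alpha.

(* Main.v *)
Require Import Defs.
From HB Require Import structures.
From mathcomp Require Import all_boot all_order all_algebra.
From mathcomp Require Import all_classical all_reals all_analysis.
From mathcomp Require Import ring lra.
Import Order.TTheory GRing.Theory Num.Theory.
Import numFieldNormedType.Exports.
Local Open Scope classical_set_scope.
Local Open Scope ring_scope.
Section IP.
Variables (R : realType) (X : normedModType R) (ip : X -> X -> R).
Hypothesis hip : is_inner_product ip.

Lemma ipD x y z : ip (x + y) z = ip x z + ip y z.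
Proof. by have [_ [h _]] := hip; have := h 1 x y z; rewrite scale1r mul1r. Qed.
Lemma ip0 z : ip 0 z = 0.
Proof. have := ipD 0 0 z; rewrite addr0; lra. Qed.
Lemma ipZ a x z : ip (a *: x) z = a * ip x z.
Proof. by have [_ [h _]] := hip; rewrite -[a *: x]addr0 h ip0 addr0. Qed.
Lemma ipB x y z : ip (x - y) z = ip x z - ip y z.
Proof. by rewrite ipD -scaleN1r ipZ mulN1r. Qed.
Lemma ipBr x y z : ip z (x - y) = ip z x - ip z y.
Proof. by have [s _] := hip; rewrite s ipB !(s z). Qed.
Lemma ipZr a x z : ip z (a *: x) = a * ip z x.
Proof. by have [s _] := hip; rewrite s ipZ (s z). Qed.
Lemma ipn x : ip x x = `|x| ^+ 2.
Proof. by have [_ [_ h]] := hip. Qed.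

Lemma normB2 x y : `|x - y| ^+ 2 = `|x| ^+ 2 - 2 * ip x y + `|y| ^+ 2.
Proof.
have [s _] := hip.
by rewrite -!ipn ipB !ipBr (s y x); ring.
Qed.

Lemma conic_core (x x0 : X) :
  (forall y, `|y| = `|x| -> `|x - x0| ^+ 2 <= `|y - x0| ^+ 2) ->
  conically_dependent x x0.
Proof.
move=> H.
have [x00|nz] := eqVneq x0 0.
  by exists 0; split => //; right; rewrite scale0r.
set p := `|x0|; set a := `|x|.
have p0 : 0 < p by rewrite normr_gt0.
have a0 : 0 <= a by exact: normr_ge0.
have ny : `|(a / p) *: x0| = a.
  by rewrite normrZ ger0_norm ?divr_ge0 ?normr_ge0 // divfK // gt_eqF.
have := H _ ny.
have -> : (a / p) *: x0 - x0 = (a / p - 1) *: x0 by rewrite scalerBl scale1r.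
rewrite normrZ exprMn -/p real_normK ?num_real // normB2 -/a -/p => hle.
have key : a * p <= ip x x0.
  have : (a / p - 1) ^+ 2 * p ^+ 2 = (a - p) ^+ 2.
    by rewrite -exprMn mulrBl mul1r mulrVK // unitfE gt_eqF.
  move=> e; rewrite e in hle.
  have : 0 <= 2 * (ip x x0 - a * p) by move: hle; lra.
  by rewrite pmulr_rge0 // subr_ge0.
have hz : `|p *: x - a *: x0| ^+ 2 <= 0.
  rewrite normB2 ipZ ipZr !normrZ (ger0_norm (ltW p0)) (ger0_norm a0) -/a -/p.
  have : 0 <= a * p by rewrite mulr_ge0 // ltW.
  move: key; set i := ip x x0 => key hap.
  rewrite !exprMn.
  have : 0 <= p * a * (i - a * p) by rewrite mulr_ge0 ?subr_ge0 // mulr_ge0 // ltW.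
  nra.
have : `|p *: x - a *: x0| = 0.
  by apply/eqP; rewrite -sqrf_eq0 eq_le hz sqr_ge0.
move/eqP; rewrite normr_eq0 subr_eq0 => /eqP e.
exists (a / p); split; first by rewrite divr_ge0 // ltW.
left; by rewrite mulrC -scalerA -e scalerA mulVf ?scale1r // gt_eqF.
Qed.
End IP.
Lemma fst_cont (R : realType) : continuous (fun z : R * R => z.1).
Proof. by move=> z; exact: cvg_fst. Qed.
Lemma snd_cont (R : realType) : continuous (fun z : R * R => z.2).
Proof. by move=> z; exact: cvg_snd. Qed.

Lemma min2 (R : realType) (G : R * R -> R) (M : R) :
  continuous G ->
  (forall z, G z <= G (0, 0) -> `|z.1| <= M /\ `|z.2| <= M) ->
  exists z, forall w, G z <= G w.
Proof.
move=> cG coer.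
have [h1 _] := coer (0,0) (lexx _).
have M0 : 0 <= M by move: h1; rewrite /= normr0.
have ne : (`[-M, M] `*` `[-M, M]) !=set0.
  by exists (0,0); split; rewrite /= in_itv /= oppr_le0 M0.
have cK : compact (`[-M, M] `*` `[-M, M]) by apply: compact_setX; exact: segment_compact.
have [c cK' cmin] := compact_EVT_min ne cK (continuous_subspaceT cG).
exists c => w.
have Hc0 : G c <= G (0,0).
  by apply: cmin; rewrite inE; split; rewrite /= in_itv /= oppr_le0 M0.
case: (lerP (G w) (G (0,0))) => hw.
- apply: cmin; rewrite inE; have [a b] := coer w hw.
  by split; rewrite /= in_itv /= -ler_norml.
- exact: (le_trans Hc0 (ltW hw)).
Qed.

Section Main.
Variables (R : realType) (X : normedModType R) (beta : R) (u0 v0 : X) (g0 : R).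

Definition Fv (u v : X) (g : R) :=
  `|u - u0| ^+ 2 + `|v - v0| ^+ 2 + beta ^+ 2 * (g - g0) ^+ 2.

Lemma Fv_ge0 u v g : 0 <= Fv u v g.
Proof. rewrite /Fv; apply: addr_ge0; [apply: addr_ge0|apply: mulr_ge0]; exact: sqr_ge0. Qed.

Lemma wdistE u v g : wdist beta (u, v, g) (u0, v0, g0) = Num.sqrt (Fv u v g).
Proof. by rewrite /wdist /wnorm /= real_normK ?num_real. Qed.

Lemma wdist_le u v g u' v' g' :
  (wdist beta (u, v, g) (u0, v0, g0) <= wdist beta (u', v', g') (u0, v0, g0))
  = (Fv u v g <= Fv u' v' g').
Proof. by rewrite !wdistE ler_sqrt // Fv_ge0. Qed.
End Main.

Lemma unit_dir (R : realType) (X : normedModType R) (e : X) (x0 : X) :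
  e != 0 -> exists d : X, `|d| = 1 /\ forall a, 0 <= a -> `|a *: d - x0| = `|a - `|x0| |.
Proof.
move=> ne.
have [->|nz] := eqVneq x0 0.
  exists (`|e|^-1 *: e); split.
    by rewrite normrZ normfV normr_id mulVf // normr_eq0.
  move=> a a0; rewrite subr0 normr0 subr0 normrZ normrZ normfV normr_id mulVf ?normr_eq0 //.
  by rewrite mulr1.
have p0 : 0 < `|x0| by rewrite normr_gt0.
exists (`|x0|^-1 *: x0); split.
  by rewrite normrZ normfV normr_id mulVf // normr_eq0.
move=> a a0.
have -> : a *: (`|x0|^-1 *: x0) - x0 = (a / `|x0| - 1) *: x0.
  by rewrite scalerBl scale1r scalerA.
rewrite normrZ.
rewrite -{2}(ger0_norm (normr_ge0 x0)) -normrM.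
by rewrite mulrBl divfK ?gt_eqF // mul1r.
Qed.

Definition Gf (R : realType) (beta alpha p q g0 : R) (z : R * R) : R :=
  (z.1 - p) * (z.1 - p) + (z.2 - q) * (z.2 - q) +
  beta * beta * (((z.1 * z.1 - z.2 * z.2) * (2 * alpha)^-1 - g0) *
                 ((z.1 * z.1 - z.2 * z.2) * (2 * alpha)^-1 - g0)).

Arguments Gf {R}.

Lemma Gf_cont (R : realType) (beta alpha p q g0 : R) :
  continuous (Gf beta alpha p q g0).
Proof.
move=> z; rewrite /Gf.
have c1 := fst_cont R z; have c2 := snd_cont R z.
repeat (apply: cvgD || apply: cvgB || apply: cvgN || apply: cvgM || exact: cvg_cst || exact: c1 || exact: c2).
Qed.

Lemma sq_dist_le (R : realType) (X : normedModType R) (u u0 : X) :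
  (`|u| - `|u0|) ^+ 2 <= `|u - u0| ^+ 2.
Proof.
have h := ler_dist_dist u u0.
have h0 := normr_ge0 (`|u| - `|u0|).
have e := real_normK (num_real (`|u| - `|u0|)).
rewrite -e; nra.
Qed.

Lemma sq_bound (R : realType) (t c : R) : 0 <= t -> 0 <= c -> t * t <= c -> t <= c + 1.
Proof.
move=> t0 c0 h; case: (lerP t (c + 1)) => // h'.
have : 0 < (t - (c + 1)) * t by rewrite mulr_gt0 // ?subr_gt0; lra.
nra.
Qed.

Arguments Fv {R X}.
Arguments conic_core {R X ip}.
Arguments unit_dir {R X}.
Arguments sq_dist_le {R X}.
Arguments min2 {R G M}.
Arguments Gf_cont {R}.

Theorem mainTheorem3 (R : realType) (X : completeNormedModType R)
  (ip : X -> X -> R) (alpha beta : R) (u0 v0 : X) (gamma0 : R) :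
  is_inner_product ip -> alpha != 0 -> 0 < beta ->
  metric_proj beta (Ctilde X alpha) (u0, v0, gamma0) !=set0 /\
  (forall (u v : X) (gamma : R),
     metric_proj beta (Ctilde X alpha) (u0, v0, gamma0) (u, v, gamma) ->
     conically_dependent u u0 /\ conically_dependent v v0).
Proof.
move=> hip an0 b0.
have a2 : 2 * alpha != 0 by rewrite mulf_neq0 // pnatr_eq0.
split; last first.
  move=> u v g [Cw Hmin]; split; apply: (conic_core hip) => y hy.
    have := Hmin (y, v, g); rewrite wdist_le /Fv.
    have Cy : Ctilde X alpha (y, v, g) by rewrite /Ctilde /= hy.
    move/(_ Cy); lra.
  have := Hmin (u, y, g); rewrite wdist_le /Fv.
  have Cy : Ctilde X alpha (u, y, g) by rewrite /Ctilde /= hy.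
  move/(_ Cy); lra.
case: (pselect (exists e : X, e != 0)) => [[e ne]|N]; last first.
  have z0 : forall x : X, x = 0.
    by move=> x; case: (eqVneq x 0) => // h; exfalso; apply: N; exists x.
  exists (0, 0, 0); split.
    by rewrite /Ctilde /= normr0 subrr mulr0.
  move=> [[u' v'] g']; rewrite (z0 u') (z0 v') /Ctilde /= normr0 subrr => /esym.
  by move/eqP; rewrite mulf_eq0 (negbTE a2) /= => /eqP ->.
have [du [du1 hdu]] := unit_dir e u0 ne.
have [dv [dv1 hdv]] := unit_dir e v0 ne.
set p := `|u0|; set q := `|v0|.
have p0 : 0 <= p := normr_ge0 _.
have q0 : 0 <= q := normr_ge0 _.
pose G := Gf beta alpha p q gamma0.
have G0 : 0 <= G (0, 0).
  by rewrite /G /Gf /=; apply: addr_ge0; [apply: addr_ge0|apply: mulr_ge0];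
     rewrite -?expr2 ?sqr_ge0.
have coer : forall z, G z <= G (0, 0) ->
    `|z.1| <= p + q + G (0, 0) + 1 /\ `|z.2| <= p + q + G (0, 0) + 1.
  move=> z hz.
  have t1 : (z.1 - p) * (z.1 - p) <= G (0, 0).
    apply: le_trans hz; rewrite /G /Gf /=.
    have : 0 <= (z.2 - q) * (z.2 - q) by rewrite -expr2 sqr_ge0.
    have : 0 <= beta * beta * (((z.1 * z.1 - z.2 * z.2) / (2 * alpha) - gamma0) *
                 ((z.1 * z.1 - z.2 * z.2) / (2 * alpha) - gamma0)).
      by rewrite mulr_ge0 // -expr2 sqr_ge0.
    lra.
  have t2 : (z.2 - q) * (z.2 - q) <= G (0, 0).
    apply: le_trans hz; rewrite /G /Gf /=.
    have : 0 <= (z.1 - p) * (z.1 - p) by rewrite -expr2 sqr_ge0.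
    have : 0 <= beta * beta * (((z.1 * z.1 - z.2 * z.2) / (2 * alpha) - gamma0) *
                 ((z.1 * z.1 - z.2 * z.2) / (2 * alpha) - gamma0)).
      by rewrite mulr_ge0 // -expr2 sqr_ge0.
    lra.
  have n1 := ler_normD (z.1 - p) p.
  have n2 := ler_normD (z.2 - q) q.
  rewrite subrK in n1; rewrite subrK in n2.
  have e1 := real_normK (num_real (z.1 - p)).
  have e2 := real_normK (num_real (z.2 - q)).
  have h1 := normr_ge0 (z.1 - p).
  have h2 := normr_ge0 (z.2 - q).
  rewrite !expr2 in e1 e2.
  rewrite (ger0_norm p0) in n1; rewrite (ger0_norm q0) in n2.
  rewrite -e1 in t1; rewrite -e2 in t2.
  have s1 := sq_bound R _ _ h1 G0 t1. have s2 := sq_bound R _ _ h2 G0 t2.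
  split; lra.
have [z zmin] := min2 (Gf_cont beta alpha p q gamma0) coer.
set a := `|z.1|; set b := `|z.2|.
have a0 : 0 <= a := normr_ge0 _.
have b0' : 0 <= b := normr_ge0 _.
have Gab : G (a, b) <= G z.
  rewrite /G /Gf /=.
  have ea : a * a = z.1 * z.1 by rewrite -!expr2 real_normK // num_real.
  have eb : b * b = z.2 * z.2 by rewrite -!expr2 real_normK // num_real.
  rewrite ea eb.
  have l1 := ler_norm z.1. have l2 := ler_norm z.2.
  rewrite -/a in l1; rewrite -/b in l2.
  nra.
exists (a *: du, b *: dv, (a ^+ 2 - b ^+ 2) / (2 * alpha)); split.
  rewrite /Ctilde /= !normrZ du1 dv1 !mulr1 !ger0_norm //.
  by rewrite mulrC divfK.
move=> [[u' v'] g'] Cw; rewrite wdist_le.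
have -> : Fv beta u0 v0 gamma0 (a *: du) (b *: dv) ((a ^+ 2 - b ^+ 2) / (2 * alpha))
    = G (a, b).
  rewrite /Fv hdu // hdv // -/p -/q (real_normK (num_real (a - p))) (real_normK (num_real (b - q))).
  by rewrite /G /Gf /= !expr2.
apply: (le_trans Gab); apply: (le_trans (zmin (`|u'|, `|v'|))).
rewrite /G /Gf /Fv /=.
move: Cw; rewrite /Ctilde /= => Cw.
have -> : (`|u'| * `|u'| - `|v'| * `|v'|) / (2 * alpha) = g'.
  by rewrite -!expr2 Cw mulrC mulKf.
have h1 := sq_dist_le u' u0. have h2 := sq_dist_le v' v0.
rewrite -/p -/q !expr2 in h1 h2 *.
lra.
Qed.
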